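(* Let $M/K$ be obtained by strong cluster magnification from a subextension $L/K$ with $r_K(L)\ne1$. Then for fields $N_1,\dots,N_k$, the chain $M\supsetneq N_1\supsetneq\cdots\supsetneq N_k$ is the unique descending chain for $M/K$ if and only if $L\supsetneq N_1\supsetneq\cdots\supsetneq N_k$ is the unique descending chain for $L/K$.
   Context: $K$ is a perfect field with a fixed algebraic closure $\bar K$; all extensions finite inside $\bar K$; $\tilde L$ is the Galois closure of $L/K$. Cluster size $r_K(L)$: the number of roots in $L$ of the minimal polynomial over $K$ of a primitive element of $L/K$ (equals $|{\rm Aut}(L/K)|$). Strong cluster magnification: $M/K$ is obtained by strong cluster magnification from $L/K$ ($K\subseteq L\subseteq M$) if $[L:K]>2$ and there is a finite Galois $F/K$ with $\tilde L$ and $F$ linearly disjoint over $K$ and $LF=M$. The unique descending chain of a finite extension $P/K$ is $P=N_0\supsetneq N_1\supsetneq\cdots\supsetneq N_k$ where each $N_i$ is the unique intermediate field of $N_{i-1}/K$ with $N_{i-1}/N_i$ Galois of degree $r_K(N_{i-1})$, stopping at the first $N_k$ with $r_K(N_k)=1$. *)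

(* Defs.v *)
From HB Require Import structures.
From mathcomp Require Import all_boot all_order all_algebra all_fingroup all_field.
Set Implicit Arguments. Unset Strict Implicit. Unset Printing Implicit Defensive.
Import GRing.Theory.
Local Open Scope ring_scope.

(* Setting: the base field K of the paper is the base field [F] of an ambient
   finite normal (and separable) extension [Om : splittingFieldType F]; all
   finite extensions of K considered are subfields of [Om] (they all contain
   the image of F, i.e. 1%AS). *)

Definition perfect_field (F : fieldType) : Prop :=
  forall p : nat, p \in [pchar F] -> forall x : F, exists y : F, y ^+ p = x.

Section Defs.
Variables (F : fieldType) (Om : splittingFieldType F).

(* cluster size r_K(E) = |Aut(E/K)|; 'Gal(E / 1) is the group of
   automorphisms of E fixing the base field K = F. *)
Definition cluster_size (E : {subfield Om}) : nat := #|('Gal(E / 1%AS))%g|.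

Definition galois_closure (E : {subfield Om}) : {vspace Om} :=
  (\big[@prodv F Om/1%VS]_(s in ('Gal({:Om} / 1%AS))%g) (s @: E))%VS.

Definition lin_indep_over (B : {vspace Om}) (X : seq Om) : Prop :=
  forall c : seq Om, size c = size X -> all (fun a => a \in B) c ->
    \sum_(i < size X) c`_i * X`_i = 0 -> all (fun a => a == 0) c.

Definition lin_disjoint (A B : {vspace Om}) : Prop :=
  forall X : seq Om, all (fun x => x \in A) X ->
    lin_indep_over 1%VS X -> lin_indep_over B X.

Definition strong_cluster_magnification (L M : {subfield Om}) : Prop :=
  (L <= M)%VS /\ (2 < \dim L)%N /\
  exists Fg : {subfield Om},
    galois 1%AS Fg /\ lin_disjoint (galois_closure L) Fg /\
    (L * Fg)%VS = M.

Definition chain_step (P N : {subfield Om}) : Prop :=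
  (N <= P)%VS /\ galois N P /\ \dim_N P = cluster_size P.

(* [desc_chain P s] : P = N_0 ⊋ s_1 ⊋ ... ⊋ s_k is the unique descending
   chain of P/K, stopping at the first field of cluster size 1. *)
Fixpoint desc_chain (P : {subfield Om}) (s : seq {subfield Om}) : Prop :=
  match s with
  | [::] => cluster_size P = 1%N
  | N :: s' =>
      cluster_size P <> 1%N /\ chain_step P N /\
      (forall N', chain_step P N' -> N' = N) /\ desc_chain N s'
  end.

End Defs.

(* Main.v *)
Require Import Defs.
From HB Require Import structures.
From mathcomp Require Import all_boot all_order all_algebra all_fingroup all_field.
Set Implicit Arguments. Unset Strict Implicit. Unset Printing Implicit Defensive.
Import GRing.Theory.

Section Aux.
Local Open Scope ring_scope.
Variables (F : fieldType) (Om : splittingFieldType F).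

Lemma key_disj (L Fg : {subfield Om}) (T : {vspace Om}) :
  (L <= T)%VS -> lin_disjoint T Fg -> forall z, z \in T -> z \in (L * Fg)%VS -> z \in L.
Proof.
move=> sLT ldis z Tz zLF; apply: contraT => zL.
pose n := \dim L; pose es := vbasis L.
have hz : z \in (\sum_(i < n) (Fg * <[es`_i]>))%VS.
  move: zLF; apply/subvP; rewrite prodvC; apply/prodvP=> u v Fu Lv.
  rewrite (coord_vbasis Lv) mulr_sumr; apply: memv_sumr => i _.
  by rewrite -scalerAr memvZ // memv_mul // memv_line.
have /memv_sumP[vs hvs zE] := hz.
have : forall i : 'I_n, exists d, d \in Fg /\ vs i = d * es`_i.
  move=> i; have := hvs i isT; rewrite -limg_amulr => /memv_imgP[d Fd ->].
  by exists d; rewrite lfunE.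
case/fin_all_exists => d hd.
have zE' : z = \sum_(i < n) d i * es`_i.
  by rewrite zE; apply: eq_bigr => i _; case: (hd i).
pose X := z :: (es : seq Om).
have allX : all (fun x => x \in T) X.
  rewrite /= Tz /=; apply/allP => x /vbasis_mem Lx; exact: (subvP sLT).
have indep1 : lin_indep_over 1%VS X.
  move=> [|c0 c'] //= [szc'] /andP[c01 /allP c'1].
  rewrite big_ord_recl /= => hsum.
  rewrite size_tuple in hsum szc'.
  have : forall i : 'I_n, exists k : F, c'`_i = k%:A.
    move=> i; have : c'`_i \in (1%VS : {vspace Om}) by apply: c'1; rewrite mem_nth // szc'.
    by case/vlineP => k ->; exists k.
  case/fin_all_exists => k hk.
  have hsum' : \sum_(i < n) c'`_(0 + i) * es`_(0 + i) = \sum_(i < n) k i *: es`_i.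
    by apply: eq_bigr => i _; rewrite add0n hk mulr_algl.
  rewrite hsum' in hsum.
  case: (eqVneq c0 0) => [c00 | c0n].
    rewrite c00 mul0r add0r in hsum.
    have /freeP fr := basis_free (vbasisP L).
    have k0 := fr k hsum.
    rewrite /=; apply/(all_nthP 0) => i hi.
    rewrite szc' in hi; by rewrite (hk (Ordinal hi)) k0 scale0r.
  exfalso; apply: (negP zL).
  have : c0 * z \in L.
    move/eqP: hsum; rewrite addr_eq0 => /eqP ->.
    rewrite memvN; apply: memv_suml => i _.
    by rewrite memvZ // vbasis_mem // mem_nth // size_tuple.
  have c0L : c0 \in L by apply: (subvP (sub1v L)).
  move=> h; rewrite -(mulKf c0n z); apply: memvM => //; by rewrite memvV.
pose c := 1 :: [seq - d i | i <- enum 'I_n].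
have hc : all (fun a => a \in Fg) c.
  rewrite /= mem1v /=; apply/allP => _ /mapP[i _ ->]; rewrite memvN; by case: (hd i).
have hs : size c = size X by rewrite /= size_map size_enum_ord size_tuple.
have := ldis X allX indep1 c hs hc.
rewrite /=. rewrite big_ord_recl /= mul1r oner_eq0 /=.
suff -> : \sum_(i < size es) [seq - d i0 | i0 <- enum 'I_n]`_(0 + i) * es`_(0 + i) = - z.
  by rewrite subrr => /(_ erefl).
rewrite zE' -sumrN size_tuple; apply: eq_bigr => i _.
by rewrite add0n (nth_map i) ?size_enum_ord // nth_ord_enum mulNr.
Qed.

Definition fixP (E : {subfield Om}) : {subfield Om} :=
  @fixedField_aspace _ _ E ('Gal(E / 1%AS))%g.

Lemma fixP_mem (E : {subfield Om}) x :
  x \in fixP E <-> (x \in E /\ forall s, s \in ('Gal({:Om} / 1%AS))%g ->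
                    (s @: E)%VS = E -> s x = x).
Proof.
split.
  move/mem_fixedFieldP => [Ex fx]; split => // s _ sE.
  have gE : gal E s \in ('Gal(E / 1%AS))%g.
    by rewrite gal_kAut ?sub1v // kAut1E limg_gal subvv.
  by rewrite -(galK _ Ex) ?sE // fx.
move=> [Ex h]; apply/fixedFieldP => // y gy.
have sE : (1%AS <= E <= fullv)%VS by rewrite sub1v subvf.
have hy : kHom 1%AS E y by rewrite -gal_kHom ?sub1v.
have [s gs eq] := kHom_to_gal sE (normalFieldf 1%AS) hy.
rewrite eq //; apply: h => //.
by rewrite -(eq_in_limg eq) limg_gal.
Qed.

Lemma chain_step_fix (P N : {subfield Om}) : chain_step P N <-> N = fixP P.
Proof.
split.
  move=> [sNP [gNP dimNP]].
  have eqG : ('Gal(P / N))%g = ('Gal(P / 1%AS))%g.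
    apply/eqP; rewrite eqEcard galS ?sub1v //= -(galois_dim gNP) dimNP /cluster_size.
    by rewrite leqnn.
  apply/val_inj => /=; rewrite -eqG; apply/esym/galois_fixedField.
  exact: gNP.
move=> ->; split; first exact: fixedField_bound.
split; first exact: fixedField_galois.
by rewrite /cluster_size (dim_fixedField ('Gal(P / 1%AS))%G).
Qed.

Lemma cs1 (P : {subfield Om}) : cluster_size P = 1%N <-> fixP P = P.
Proof.
split.
  move=> h; apply/val_inj/eqP; rewrite /= eqEsubv fixedField_bound /=.
  apply/subvP => x Px; apply/fixedFieldP => // y gy.
  move/eqP: h => /cards1P [w hw].
  have h1 : (1%g : gal_of P) \in ('Gal(P / 1%AS))%g by exact: group1.
  move: gy h1; rewrite hw !inE => /eqP -> /eqP <-.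
  exact: gal_id.
move=> h.
have h' : (fixedField ('Gal(P / 1%AS))%g = P)%VS by move: h => /(congr1 val).
by rewrite /cluster_size (dim_fixedField ('Gal(P / 1%AS))%G) /= h' divnn adim_gt0.
Qed.

Lemma gc_sub (L : {subfield Om}) (s : gal_of {:Om}) :
  s \in ('Gal({:Om} / 1%AS))%g -> (s @: L <= galois_closure L)%VS.
Proof.
move=> gs; rewrite /galois_closure (bigD1 s) //=.
rewrite -{1}(prodv1 (s @: L)%VS); apply: prodvSr.
apply: (big_ind (fun V : {vspace Om} => (1 <= V)%VS)) => //.
  by move=> x y hx hy; rewrite -(prodv1 1%VS); apply: prodvS.
by move=> t _; rewrite -(aimg1 t); apply: limgS; apply: sub1v.
Qed.

Lemma lim_gal1 (E : {vspace Om}) : ((1%g : gal_of {:Om}) @: E)%VS = E.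
Proof.
rewrite -{2}(lim1g E); apply: eq_in_limg => a _.
by rewrite gal_id id_lfunE.
Qed.

Lemma desc_eq (P Q : {subfield Om}) s :
  fixP P = fixP Q -> cluster_size P <> 1%N -> cluster_size Q <> 1%N ->
  desc_chain P s <-> desc_chain Q s.
Proof.
move=> e nP nQ; case: s => [|N s'] /=.
  by split => h; [case: nP | case: nQ].
split => -[_ [c [_ d]]]; split => //; split.
- by apply/chain_step_fix; rewrite -e; apply/chain_step_fix.
- split => // N' /chain_step_fix ->; rewrite -e; apply/esym/chain_step_fix.
  exact: c.
- by apply/chain_step_fix; rewrite e; apply/chain_step_fix.
- split => // N' /chain_step_fix ->; rewrite e; apply/esym/chain_step_fix.
  exact: c.
Qed.

End Aux.

Theorem theorem8p14 (F : fieldType) (Om : splittingFieldType F)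
  (perfF : perfect_field F) (galOm : galois 1%AS (fullv : {vspace Om}))
  (L M : {subfield Om})
  (hmag : strong_cluster_magnification L M)
  (hrL : cluster_size L <> 1%N)
  (s : seq {subfield Om}) :
  desc_chain M s <-> desc_chain L s.
Proof.
case: hmag => sLM [_ [Fg [gFg [ldis defM]]]].
have nFg : forall t : gal_of {:Om}, (t @: Fg)%VS = Fg.
  move=> t; case/and3P: gFg => _ _ nF.
  have h : kAut 1%AS fullv t by rewrite kAut1E subvf.
  have sF : (1%AS <= Fg <= fullv)%VS by rewrite sub1v subvf.
  by have /andP[_ /eqP] := normalField_kAut sF nF h.
have sLT : (L <= galois_closure L)%VS.
  by rewrite -{1}(lim_gal1 L); apply: gc_sub; apply: group1.
have stab : forall t, t \in ('Gal({:Om} / 1%AS))%g ->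
    ((t @: L)%VS = L <-> (t @: M)%VS = M).
  move=> t gt; split => [sL | sM].
    by rewrite -defM aimgM sL nFg.
  have sub : (t @: L <= L)%VS.
    apply/subvP => _ /memv_imgP[y Ly ->].
    apply: (key_disj sLT ldis).
      by apply: (subvP (gc_sub L gt)); apply: memv_img.
    by rewrite defM -sM; apply: memv_img; apply: (subvP sLM).
  apply/eqP; rewrite -(dimv_leqif_eq sub) limg_dim_eq //.
  by rewrite (eqP (AEnd_lker0 _)) capv0.
have fixeq : fixP L = fixP M.
  apply/val_inj/vspaceP => x; apply/idP/idP.
    move/fixP_mem => [Lx h]; apply/fixP_mem; split; first exact: (subvP sLM).
    by move=> t gt tM; apply: h => //; apply/stab.
  move/fixP_mem => [Mx h].
  have Lx : x \in L.
    have gL : galois L fullv by apply: (galoisS _ galOm); rewrite sub1v subvf.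
    have /galois_fixedField fL := gL.
    rewrite -fL; apply/fixedFieldP; first exact: memvf.
    move=> t gt; apply: h.
      by apply: (subsetP (galS _ (sub1v L))).
    apply/stab; first by apply: (subsetP (galS _ (sub1v L))).
    rewrite -{2}(lim1g L); apply: eq_in_limg => a La.
    by rewrite id_lfunE (fixed_gal (subvf L) gt).
  apply/fixP_mem; split => // t gt tL; apply: h => //; by apply/stab.
have nM : cluster_size M <> 1%N.
  move/cs1 => hM; apply: hrL; apply/cs1.
  have sML : (M <= L)%VS.
    rewrite -{1}hM -fixeq; exact: fixedField_bound.
  have eML : M = L by apply/val_inj/subv_anti; rewrite sML sLM.
  by rewrite fixeq hM eML.
exact: desc_eq.
Qed.
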